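(* Let $\Sigma$ be a non-empty finite or countably infinite alphabet, $p$ a positive Bernoulli distribution on $\Sigma$, and $A=(Q,\Sigma,\delta,q_s,F)$ a strongly connected DFA with $F\neq\emptyset$. Then there exists a real number $c>0$ such that for every $\epsilon>0$, $\lim_{n\to\infty}\mu_p(E_n(c-\epsilon))=0$.
   Context: $p:\Sigma\to(0,1]$ with $\sum_ap(a)=1$; $\mu_p(a_1\cdots a_n)=\prod_ip(a_i)$ and for $W\subseteq\Sigma^*$, $\mu_p(W)=\sum_{w\in W}\mu_p(w)$. For $q\in Q$, $A_q$ denotes the DFA $A$ with start state $q$, and for a word $w=w_1\cdots w_n$, $A_q[w]$ is the subsequence of those $w_i$ with $\delta^*(q,w_1\cdots w_{i-1})\in F$. For real $b$ and $n\ge1$: $E_n(b,q)=\{w\in\Sigma^n: |A_q[w]|\le bn\}$ and $E_n(b)=\bigcup_{q\in Q}E_n(b,q)$. $A$ is strongly connected if its underlying directed graph (edges $q\to\delta(q,a)$) is strongly connected. *)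

(* Defs.v *)
From HB Require Import structures.
From mathcomp Require Import all_boot all_order all_algebra.
From mathcomp Require Import all_classical all_reals all_analysis.
From Stdlib Require Import Relations.Relation_Operators.
Set Implicit Arguments. Unset Strict Implicit. Unset Printing Implicit Defensive.
Import Order.TTheory GRing.Theory Num.Theory.
Local Open Scope ring_scope.

Section Defs.
Variables (R : realType) (Sigma : countType).

Definition mu_word (p : Sigma -> R) (w : seq Sigma) : R :=
  \prod_(a <- w) p a.

Definition mu_p (p : Sigma -> R) (W : set (seq Sigma)) : \bar R :=
  \esum_(w in W) (mu_word p w)%:E.

Definition positive_bernoulli (p : Sigma -> R) : Prop :=
  (forall a, 0 < p a <= 1) /\ (\esum_(a in [set: Sigma]) (p a)%:E = 1%E)%E.

Variable Q : finType.

Definition dfa_edge (delta : Q -> Sigma -> Q) (q q' : Q) : Prop :=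
  exists a, delta q a = q'.

Definition strongly_connected (delta : Q -> Sigma -> Q) : Prop :=
  forall q q' : Q, clos_refl_trans Q (dfa_edge delta) q q'.

Fixpoint A_sub (delta : Q -> Sigma -> Q) (F : {set Q}) (q : Q) (w : seq Sigma)
  : seq Sigma :=
  match w with
  | [::] => [::]
  | a :: w' => if q \in F then a :: A_sub delta F (delta q a) w'
               else A_sub delta F (delta q a) w'
  end.

Definition E_nq (delta : Q -> Sigma -> Q) (F : {set Q}) (n : nat) (b : R) (q : Q)
  : set (seq Sigma) :=
  [set w | size w = n /\ (size (A_sub delta F q w))%:R <= b * n%:R].

Definition E_n (delta : Q -> Sigma -> Q) (F : {set Q}) (n : nat) (b : R)
  : set (seq Sigma) :=
  [set w | exists q : Q, E_nq delta F n b q w].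

End Defs.

(* Main.v *)
Require Import Defs.
From HB Require Import structures.
From mathcomp Require Import all_boot all_order all_algebra.
From mathcomp Require Import all_classical all_reals all_analysis.
From mathcomp Require Import ring lra.
From Stdlib Require Import Relations.Relation_Operators Relations.Operators_Properties.
Import Order.TTheory GRing.Theory Num.Theory.
Local Open Scope classical_set_scope.
Local Open Scope ring_scope.
Set Implicit Arguments. Unset Strict Implicit. Unset Printing Implicit Defensive.

Lemma esumZl_le (R : realType) (T : choiceType) (I : set T) (c : R) (f : T -> \bar R) :
  0 <= c -> (forall i, (0 <= f i)%E) ->
  (\esum_(i in I) (c%:E * f i) <= c%:E * \esum_(i in I) f i)%E.
Proof.
move=> c0 f0; apply: ge_ereal_sup => _ [X [finX XI] <-] /=.
rewrite fsbig_finite//= -ge0_sume_distrr; last first.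
  by move=> i _; apply: f0.
apply: lee_wpmul2l; first by rewrite lee_fin.
rewrite -fsbig_finite//; apply: ereal_sup_ubound; exists X => //.
Qed.

Lemma esum_subset_le (R : realType) (T : choiceType) (I J : set T) (f : T -> \bar R) :
  I `<=` J -> (forall i, J i -> (0 <= f i)%E) ->
  (\esum_(i in I) f i <= \esum_(i in J) f i)%E.
Proof.
move=> IJ f0; rewrite (esum_mkcond I) (esum_mkcond J); apply: le_esum => i _.
case: ifPn => iI; first by rewrite ifT// inE; apply: IJ; rewrite -inE.
by case: ifPn => // /[!inE] /f0.
Qed.

Lemma esum_cons (R : realType) (Sigma : countType) (n : nat) (g : seq Sigma -> \bar R) :
  (forall w, (0 <= g w)%E) ->
  \esum_(w in [set w : seq Sigma | size w = n.+1]) g w =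
  \esum_(a in [set: Sigma]) \esum_(v in [set v : seq Sigma | size v = n]) g (a :: v).
Proof.
move=> g0; rewrite esum_esum; last by move=> *; exact: g0.
rewrite (reindex_esum ([set: Sigma] `*`` (fun=> [set v : seq Sigma | size v = n])) _
   (fun k => k.1 :: k.2)) //.
split.
- by move=> [a v] /= [_ /= ->].
- by move=> [a v] [b u] _ _ /= [-> ->].
- move=> [|a v] //= [Hv]; exists (a, v) => //.
Qed.

Definition tq (R : realType) (Q : finType) (F : {set Q}) (q : Q) : R :=
  if q \in F then 2^-1 else 1.

Definition Gf (R : realType) (Sigma : countType) (p : Sigma -> R) (Q : finType)
  (delta : Q -> Sigma -> Q) (F : {set Q}) (q : Q) (w : seq Sigma) : R :=
  mu_word p w * (2^-1) ^+ size (A_sub delta F q w).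

Definition G (R : realType) (Sigma : countType) (p : Sigma -> R) (Q : finType)
  (delta : Q -> Sigma -> Q) (F : {set Q}) (n : nat) (q : Q) : \bar R :=
  \esum_(w in [set w : seq Sigma | size w = n]) (Gf p delta F q w)%:E.

Lemma mu_word_ge0 (R : realType) (Sigma : countType) (p : Sigma -> R) w :
  (forall a, 0 <= p a) -> 0 <= mu_word p w.
Proof. by move=> p0; rewrite /mu_word; apply: prodr_ge0 => a _. Qed.

Lemma Gf_ge0 (R : realType) (Sigma : countType) (p : Sigma -> R) (Q : finType)
  (delta : Q -> Sigma -> Q) (F : {set Q}) q w :
  (forall a, 0 <= p a) -> 0 <= Gf p delta F q w.
Proof.
by move=> p0; rewrite /Gf mulr_ge0 ?mu_word_ge0 // exprn_ge0 // invr_ge0.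
Qed.

Lemma Gf_cons (R : realType) (Sigma : countType) (p : Sigma -> R) (Q : finType)
  (delta : Q -> Sigma -> Q) (F : {set Q}) q a v :
  Gf p delta F q (a :: v) = p a * @tq R Q F q * Gf p delta F (delta q a) v.
Proof.
rewrite /Gf /tq /mu_word big_cons /=; case: ifP => _ /=.
  by rewrite exprS; ring.
by rewrite mulr1; ring.
Qed.

Lemma G_bound (R : realType) (Sigma : countType) (p : Sigma -> R) (Q : finType)
  (delta : Q -> Sigma -> Q) (F : {set Q}) (h : Q -> R) (lam : R) :
  (forall a, 0 <= p a) -> 0 <= lam -> (forall q, 1 <= h q) ->
  (forall q, (\esum_(a in [set: Sigma]) (p a * @tq R Q F q * h (delta q a))%:E
              <= (lam * h q)%:E)%E) ->
  forall n q, (G p delta F n q <= (lam ^+ n * h q)%:E)%E.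
Proof.
move=> p0 lam0 h1 Hly; elim=> [|n IH] q.
  rewrite /G (_ : [set w : seq Sigma | size w = 0%N] = [set [::]]); last first.
    by apply/seteqP; split => [[|]//|w /= ->].
  rewrite esum_set1; last by rewrite lee_fin Gf_ge0.
  rewrite /Gf /mu_word big_nil /= expr0 mulr1.
  by rewrite expr0 mul1r lee_fin.
rewrite /G esum_cons; last by move=> w; rewrite lee_fin Gf_ge0.
apply: (@le_trans _ _ (\esum_(a in [set: Sigma])
   ((p a * @tq R Q F q)%:E * G p delta F n (delta q a)))%E).
  apply: le_esum => a _; under eq_esum do rewrite Gf_cons EFinM.
  apply: esumZl_le; first by rewrite mulr_ge0 // /tq; case: ifP.
  by move=> v; rewrite lee_fin Gf_ge0.
apply: (@le_trans _ _ (\esum_(a in [set: Sigma])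
   ((lam ^+ n)%:E * (p a * @tq R Q F q * h (delta q a))%:E))%E).
  apply: le_esum => a _.
  rewrite [X in (_ <= X)%E](_ : _ = ((p a * @tq R Q F q)%:E * (lam ^+ n * h (delta q a))%:E)%E); last first.
    by rewrite -!EFinM; congr EFin; ring.
  apply: lee_wpmul2l.
    by rewrite lee_fin mulr_ge0 // /tq; case: ifP.
  exact: IH.
apply: le_trans; first apply: esumZl_le.
- exact: exprn_ge0.
- move=> a; rewrite lee_fin mulr_ge0 // ?mulr_ge0 //; last first.
    by apply: le_trans (h1 _).
  by rewrite /tq; case: ifP.
rewrite exprSr -mulrA (EFinM (lam ^+ n)); apply: lee_wpmul2l; first by rewrite lee_fin exprn_ge0.
exact: (Hly q).
Qed.

Lemma pow_half_ge1 (R : realType) (a j : nat) :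
  (a <= j)%N -> 1 <= (2 : R) ^+ j * (2^-1) ^+ a.
Proof.
move=> aj; rewrite exprVn ler_pdivlMr ?exprn_gt0 // mul1r.
by apply: ler_weXn2l => //; rewrite ler1n.
Qed.

Lemma mu_bound (R : realType) (Sigma : countType) (p : Sigma -> R) (Q : finType)
  (delta : Q -> Sigma -> Q) (F : {set Q}) (K n : nat) (b : R) :
  (forall a, 0 <= p a) -> (0 < K)%N -> b * K%:R <= 1 ->
  (mu_p p (E_n delta F n b) <=
    \sum_(q : Q) (((2 : R) ^+ (n %/ K))%:E * G p delta F n q))%E.
Proof.
move=> p0 K0 bK.
set j := (n %/ K)%N.
rewrite /mu_p.
apply: (@le_trans _ _ (\esum_(w in [set w : seq Sigma | size w = n])
      \sum_(q : Q) (((2 : R) ^+ j * Gf p delta F q w)%:E))%E).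
  apply: (@le_trans _ _ (\esum_(w in E_n delta F n b)
      \sum_(q : Q) (((2 : R) ^+ j * Gf p delta F q w)%:E))%E).
    apply: le_esum => w [q0 [Hs HA]].
    rewrite (bigD1 q0) //=; apply: le_trans (leeDl _ _); last first.
      by apply: sume_ge0 => q _; rewrite lee_fin mulr_ge0 ?exprn_ge0 ?Gf_ge0.
    rewrite lee_fin /Gf mulrCA -[X in X <= _]mulr1 ler_wpM2l ?mu_word_ge0 //.
    apply: pow_half_ge1; rewrite leq_divRL //.
    rewrite -(ler_nat R) natrM; apply: (le_trans (ler_wpM2r _ HA)) => //.
    rewrite mulrAC; apply: (@le_trans _ _ (1 * n%:R)); last by rewrite mul1r.
    by apply: ler_wpM2r => //; rewrite ler0n.
  apply: esum_subset_le; first by move=> w [q [Hs _]].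
  by move=> w _; apply: sume_ge0 => q _; rewrite lee_fin mulr_ge0 ?exprn_ge0 ?Gf_ge0.
rewrite esum_sum; last first.
  by move=> w q _ _; rewrite lee_fin mulr_ge0 ?exprn_ge0 ?Gf_ge0.
apply: lee_sum => q _; under eq_esum do rewrite EFinM.
apply: esumZl_le; first exact: exprn_ge0.
by move=> w; rewrite lee_fin Gf_ge0.
Qed.

Lemma dist_exists (Sigma : countType) (Q : finType) (delta : Q -> Sigma -> Q)
  (F : {set Q}) (a0 : Sigma) :
  strongly_connected delta -> F != finset.set0 ->
  exists (d : Q -> nat) (aq : Q -> Sigma),
    forall q, q \notin F -> ((d (delta q (aq q))).+1 <= d q)%N.
Proof.
move=> sc /set0Pn [f fF].
pose reach k q := exists w : seq Sigma, size w = k /\ foldl delta q w \in F.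
have ex q : exists k, `[< reach k q >].
  have /clos_rt_rt1n_iff H := sc q f; move: fF.
  elim: H => [x xF|x y z [a <-] _ IH /IH [k /asboolP [w [Hs Hw]]]].
    by exists 0%N; apply/asboolP; exists [::].
  by exists k.+1; apply/asboolP; exists (a :: w); rewrite /= Hs.
pose d q := ex_minn (ex q).
have H q : exists a, q \notin F -> ((d (delta q a)).+1 <= d q)%N.
  case: (boolP (q \in F)) => qF; first by exists a0.
  rewrite /d; case: ex_minnP => k /asboolP [[|a w] [Hs Hw]] kmin.
    by rewrite /= Hw in qF.
  exists a => _; rewrite -Hs /= ltnS; case: ex_minnP => m _ mmin.
  by apply: mmin; apply/asboolP; exists w.
have [aq Haq] := choice H.
by exists d, aq.
Qed.

Lemma half_div_cvg (R : realType) (K : nat) (C : R) : (0 < K)%N ->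
  (fun n : nat => (C * (2^-1) ^+ (n %/ K))%:E) @ \oo --> 0%:E.
Proof.
move=> K0; apply: cvg_EFin; first exact: nearW.
have hdiv : (fun n : nat => (n %/ K)%N) @ \oo --> \oo.
  apply/cvgnyPge => A; near=> n.
  rewrite leq_divRL //; near: n; exact: nbhs_infty_ge.
have hexp : (GRing.exp (2^-1 : R) : R ^nat) @ \oo --> 0.
  apply: cvg_expr; rewrite ger0_norm ?invr_ge0 // invf_lt1 // ltr1n //.
have := cvgMl_tmp (a := C) (cvg_comp _ _ hdiv hexp); rewrite mulr0.
exact.
Unshelve. all: end_near.
Qed.

Lemma esum_p1 (R : realType) (Sigma : countType) (p : Sigma -> R) (C : R) :
  positive_bernoulli p -> 0 <= C ->
  (\esum_(a in [set: Sigma]) (C * p a)%:E <= C%:E)%E.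
Proof.
move=> [p01 psum] C0; under eq_esum do rewrite EFinM.
apply: le_trans; first apply: esumZl_le => //.
  by move=> a; rewrite lee_fin; have /andP[/ltW] := p01 a.
by rewrite psum mule1.
Qed.

Lemma lyap (R : realType) (Sigma : countType) (p : Sigma -> R) (Q : finType)
  (delta : Q -> Sigma -> Q) (F : {set Q}) (d : Q -> nat) (aq : Q -> Sigma)
  (N : nat) (r : R) :
  positive_bernoulli p ->
  (forall q, q \notin F -> ((d (delta q (aq q))).+1 <= d q)%N) ->
  (forall q, (d q <= N)%N) ->
  0 < r -> r <= 2^-1 -> (forall q, 2 * r <= p (aq q)) ->
  forall q, (\esum_(a in [set: Sigma])
     (p a * @tq R Q F q * (4 - r ^+ d (delta q a)))%:E
     <= ((1 - r ^+ N / 4) * (4 - r ^+ d q))%:E)%E.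
Proof.
move=> pb Hd dN r0 rh pr q.
have [p01 psum] := pb.
have p0 a : 0 <= p a by have /andP[/ltW] := p01 a.
have r1 : r <= 1 by apply: le_trans rh _; rewrite invf_le1 // ler1n.
have rk k : 0 <= r ^+ k <= 1.
  by apply/andP; split; [apply: exprn_ge0; rewrite ltW | apply: exprn_ile1 => //; rewrite ltW].
have rNk : r ^+ N <= r ^+ d q by apply: ler_wiXn2l => //; rewrite ltW.
rewrite /tq; case: ifPn => qF.
  apply: le_trans; first apply: (@le_esum _ _ _ _ (fun a => (2 * p a)%:E)).
    move=> a _; rewrite lee_fin; have /andP[rk0 rk1] := rk (d (delta q a)).
    have := p0 a; nra.
  apply: le_trans; first exact: esum_p1.
  rewrite lee_fin; have /andP[? ?] := rk N; have /andP[? ?] := rk (d q); nra.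
set j := d (delta q (aq q)).
set c := p (aq q) * r ^+ j.
have Hc : 2 * r ^+ d q <= c.
  have hj : r ^+ (j.+1) >= r ^+ d q by apply: ler_wiXn2l => //; rewrite ?ltW ?Hd.
  rewrite /c; have /andP[? ?] := rk j; move: hj; rewrite exprS => hj.
  have := pr q; nra.
have Hsum : (\esum_(a in [set: Sigma]) (p a * 1 * (4 - r ^+ d (delta q a)))%:E
     + c%:E <= 4%:E)%E.
  apply: (@le_trans _ _ (\esum_(a in [set: Sigma]) ((p a * 1 * (4 - r ^+ d (delta q a)))%:E
      + (if a == aq q then c else 0)%:E))%E).
    rewrite esumD; last 2 first.
    - move=> a _; rewrite lee_fin; have /andP[? ?] := rk (d (delta q a)).
      have := p0 a; nra.
    - move=> a _; rewrite lee_fin; case: ifP => // _; rewrite /c mulr_ge0 //.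
      by have /andP[] := rk j.
    rewrite leeD2l //; apply: esum_ge; exists [set aq q].
      by split => //; exact: finite_set1.
    by rewrite fsbig_set1 eqxx.
  apply: le_trans; last apply: (@esum_p1 _ _ p 4) => //.
  apply: le_esum => a _; rewrite -EFinD lee_fin.
  have /andP[? ?] := rk (d (delta q a)); have := p0 a.
  case: eqP => [->|_]; rewrite /c /j; nra.
have Hfin : c%:E \is a fin_num by [].
rewrite -leeBrDr // in Hsum; apply: le_trans Hsum _.
rewrite -EFinB lee_fin.
have /andP[? ?] := rk N; have /andP[? ?] := rk (d q); nra.
Qed.

Theorem lemma5p4 (R : realType) (Sigma : countType) (a0 : Sigma)
  (p : Sigma -> R) (Q : finType) (delta : Q -> Sigma -> Q) (q_s : Q)
  (F : {set Q}) :
  positive_bernoulli p ->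
  strongly_connected delta ->
  F != finset.set0 ->
  exists c : R, 0 < c /\
    forall eps : R, 0 < eps ->
      (fun n : nat => mu_p p (E_n delta F n (c - eps))) @ \oo --> 0%:E.
Proof.
move=> pb sc Fne.
have [p01 psum] := pb.
have p0 a : 0 <= p a by have /andP[/ltW] := p01 a.
have p1 a : p a <= 1 by have /andP[_] := p01 a.
have [d [aq Hd]] := dist_exists a0 sc Fne.
have /set0Pn [f fF] := Fne.
pose pi := \prod_(q : Q) p (aq q).
have pi0 : 0 < pi by apply: prodr_gt0 => q _; have /andP[] := p01 (aq q).
have piq q : pi <= p (aq q).
  rewrite /pi (bigD1 q) //=; apply: ler_piMr => //.
  by apply: prodr_ile1 => i _; rewrite p0 p1.
pose r := pi / 2.
have r0 : 0 < r by rewrite /r divr_gt0.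
have rh : r <= 2^-1 by have := piq f; have := p1 (aq f); rewrite /r; lra.
have pr q : 2 * r <= p (aq q) by have := piq q; rewrite /r; lra.
pose N := (\max_(q : Q) d q)%N.
have dN q : (d q <= N)%N by apply: leq_bigmax.
pose lam := 1 - r ^+ N / 4.
have rN0 : 0 < r ^+ N by apply: exprn_gt0.
have rN1 : r ^+ N <= 1 by apply: exprn_ile1; [rewrite ltW | lra].
have lam0 : 0 <= lam by rewrite /lam; lra.
have lam1 : lam < 1 by rewrite /lam; lra.
have Gb := @G_bound R Sigma p Q delta F (fun q => 4 - r ^+ d q) lam p0 lam0.
have rk k : 0 <= r ^+ k <= 1.
  apply/andP; split; [apply: exprn_ge0; rewrite ltW // | apply: exprn_ile1; rewrite ?ltW //].
  lra.
have h1 q : 1 <= 4 - r ^+ d q by have /andP[_ ?] := rk (d q); lra.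
have {}Gb := Gb h1 (lyap pb Hd dN r0 rh pr).
have lamcvg : (GRing.exp lam : R ^nat) @ \oo --> 0.
  by apply: cvg_expr; rewrite ger0_norm.
have HK : \forall t \near \oo, `|lam ^+ t| < 4^-1.
  by apply: cvgr0_norm_lt lamcvg _ _; rewrite invr_gt0.
have [K0 _ HK0] := HK.
pose K := K0.+1.
have K0p : (0 < K)%N by [].
have HKl : lam ^+ K <= 4^-1.
  have := HK0 K (leqnSn K0); rewrite ger0_norm ?exprn_ge0 //; exact: ltW.
exists K%:R^-1; split; first by rewrite invr_gt0 ltr0n.
move=> eps eps0.
apply: (@squeeze_cvge _ _ _ _ (fun=> 0%E) _
   (fun n => ((#|Q|%:R * 4) * (2^-1) ^+ (n %/ K))%:E)); last 2 first.
- exact: cvg_cst.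
- exact: half_div_cvg.
apply: nearW => n; apply/andP; split.
  by apply: esum_ge0 => w _; rewrite lee_fin mu_word_ge0.
apply: le_trans; first apply: (@mu_bound _ _ p Q delta F K n _ p0 K0p).
  rewrite mulrBl mulVf ?pnatr_eq0 //.
  have : 0 <= eps * K%:R by rewrite mulr_ge0 ?ltW.
  lra.
set j := (n %/ K)%N.
have lamn : lam ^+ n <= (4^-1) ^+ j.
  apply: (@le_trans _ _ (lam ^+ (j * K))).
    by apply: ler_wiXn2l => //; [exact: ltW | exact: leq_trunc_div].
  rewrite mulnC exprM; apply: lerXn2r => //; rewrite ?nnegrE ?exprn_ge0 //.
have e2 : (2 : R) ^+ j * (4^-1) ^+ j = (2^-1) ^+ j.
  by rewrite -exprMn; congr (_ ^+ _); field.
apply: (@le_trans _ _ (\sum_(q : Q) (4 * (2^-1) ^+ j : R)%:E)%E).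
  apply: lee_sum => q _.
  apply: le_trans; first apply: (lee_wpmul2l _ (Gb n q)).
    by rewrite lee_fin exprn_ge0.
  rewrite -EFinM lee_fin -e2.
  have /andP[rd0 rd1] := rk (d q).
  have : 0 <= (2 : R) ^+ j by exact: exprn_ge0.
  have : 0 <= lam ^+ n by exact: exprn_ge0.
  move: lamn; set A := (2 : R) ^+ j; set B := lam ^+ n; set C := (4^-1 : R) ^+ j.
  move=> BC B0 A0; have CB : 0 <= C - B by rewrite subr_ge0.
  have := mulr_ge0 A0 CB; have := mulr_ge0 (mulr_ge0 A0 B0) rd0. nra.
rewrite sumEFin lee_fin sumr_const.
rewrite -mulrA mulr_natl.
by rewrite [X in _ <= X]mulr_natl.
Qed.
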